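(* Let $\mathbb{T}$ be a time scale, $f:\mathbb{T}\to\mathbb{R}$, and $t\in\mathbb{T}_\kappa$. Let $\alpha\in\,]0,1]$ and $A=\,]0,1]\cap\{1/q: q \text{ an odd positive integer}\}$. Then: (i) If $\alpha\in A$, $t$ is left-dense, and $f$ is nabla fractional differentiable of order $\alpha$ at $t$, then $f$ is continuous at $t$. (ii) If $\alpha\in\,]0,1]\setminus A$, $t$ is left-dense, and $f$ is nabla fractional differentiable of order $\alpha$ at $t$, then $f$ is right-continuous at $t$. (iii) If $f$ is continuous at $t$ and $t$ is left-scattered, then $f$ is nabla fractional differentiable of order $\alpha$ at $t$ with $$f^{\nabla^\alpha}(t)=\frac{f(t)-f^\rho(t)}{[t-\rho(t)]^\alpha}.$$ (iv) If $\alpha\in A$ and $t$ is left-dense, then $f$ is nabla fractional differentiable of order $\alpha$ at $t$ if and only if the limit $\lim_{s\to t}\frac{f(s)-f(t)}{(s-t)^\alpha}$ exists as a finite number; in this case $f^{\nabla^\alpha}(t)=\lim_{s\to t}\frac{f(s)-f(t)}{(s-t)^\alpha}$. (v) If $\alpha\in\,]0,1]\setminus A$ and $t$ is left-dense, then $f$ is nabla fractional differentiable of order $\alpha$ at $t$ if and only if the limit $\lim_{s\to t^+}\frac{f(s)-f(t)}{(s-t)^\alpha}$ exists as a finite number; in this case $f^{\nabla^\alpha}(t)=\lim_{s\to t^+}\frac{f(s)-f(t)}{(s-t)^\alpha}$. (vi) If $f$ is nabla fractional differentiable of order $\alpha$ at $t$, then $f(t)=f^\rho(t)+[t-\rho(t)]^\alpha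 f^{\nabla^\alpha}(t)$.
   Context: A time scale $\mathbb{T}$ is a nonempty closed subset of $\mathbb{R}$ with the topology induced from $\mathbb{R}$. The backward jump operator is $\rho(t)=\sup\{s\in\mathbb{T}: s<t\}$ (with $\sup\emptyset=\inf\mathbb{T}$), the forward jump operator is $\sigma(t)=\inf\{s\in\mathbb{T}:s>t\}$ (with $\inf\emptyset=\sup\mathbb{T}$). A point $t$ is left-dense if $\rho(t)=t$ and left-scattered if $\rho(t)<t$. $\mathbb{T}_\kappa=\mathbb{T}\setminus\{\inf\mathbb{T}\}$ if $\inf\mathbb{T}$ is finite and right-scattered ($\sigma(\inf\mathbb{T})>\inf\mathbb{T}$), and $\mathbb{T}_\kappa=\mathbb{T}$ otherwise. $f^\rho=f\circ\rho$. For $\alpha=1/q$ with $q$ odd, $x^\alpha$ denotes the real $q$-th root, defined for all real $x$. Nabla fractional derivative: for $\alpha\in]0,1]$ and $t\in\mathbb{T}_\kappa$, $f^{\nabla^\alpha}(t)$ is the real number (if it exists) such that for every $\varepsilon>0$ there is $\delta>0$ with $$\big|[f(s)-f^\rho(t)]-f^{\nabla^\alpha}(t)[s-\rho(t)]^\alpha\big|\le\varepsilon|s-\rho(t)|^\alpha$$ for all $s\in\,]t-\delta,t+\delta[\,\cap\mathbb{T}$ when $\alpha\in A$, respectively for all $s\in[t,t+\delta[\,\cap\mathbb{T}$ when $\alpha\notin A$. If it exists, $f$ is called nabla fractional differentiable of order $\alpha$ at $t$. Limits $s\to t$ are taken over $s\in\mathbb{T}$, $s\neq t$. *)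

(* Defs.v *)
From Stdlib Require Import Reals.
From Coquelicot Require Import Coquelicot.
Open Scope R_scope.

Definition time_scale (T : R -> Prop) : Prop :=
  (exists x, T x) /\ closed_set T.

(* rho(t) = sup {s in T | s < t}, with sup of the empty set = inf T. *)
Definition rho (T : R -> Prop) (t : R) : R :=
  match Lub_Rbar (fun s => T s /\ s < t) with
  | Finite r => r
  | _ => real (Glb_Rbar T)
  end.

(* sigma(t) = inf {s in T | s > t}, with inf of the empty set = sup T. *)
Definition sigma (T : R -> Prop) (t : R) : R :=
  match Glb_Rbar (fun s => T s /\ t < s) with
  | Finite r => r
  | _ => real (Lub_Rbar T)
  end.

Definition T_kappa (T : R -> Prop) (t : R) : Prop :=
  T t /\
  ~ (is_finite (Glb_Rbar T) /\
     sigma T (real (Glb_Rbar T)) > real (Glb_Rbar T) /\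
     t = real (Glb_Rbar T)).

Definition left_dense (T : R -> Prop) (t : R) : Prop := rho T t = t.
Definition left_scattered (T : R -> Prop) (t : R) : Prop := rho T t < t.

Definition inA (alpha : R) : Prop :=
  exists q : nat, Nat.odd q = true /\ alpha = 1 / INR q.

(* x^alpha: for x > 0 the usual power, 0^alpha = 0, and for x < 0 the odd
   extension -( |x|^alpha ), which is the real q-th root when alpha = 1/q
   with q odd (negative bases only occur in the statement when alpha ∈ A). *)
Definition rpow (alpha x : R) : R :=
  if Rlt_dec 0 x then Rpower x alpha
  else if Rlt_dec x 0 then - Rpower (- x) alpha
  else 0.

Definition nabla_nbhd (T : R -> Prop) (alpha t delta s : R) : Prop :=
  T s /\ ((inA alpha /\ t - delta < s < t + delta) \/
          (~ inA alpha /\ t <= s < t + delta)).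

Definition is_nabla_frac_deriv (T : R -> Prop) (f : R -> R) (alpha t D : R) : Prop :=
  forall eps : R, 0 < eps -> exists delta : R, 0 < delta /\
    forall s : R, nabla_nbhd T alpha t delta s ->
      Rabs ((f s - f (rho T t)) - D * rpow alpha (s - rho T t))
        <= eps * rpow alpha (Rabs (s - rho T t)).

Definition nabla_frac_differentiable (T : R -> Prop) (f : R -> R) (alpha t : R) : Prop :=
  exists D, is_nabla_frac_deriv T f alpha t D.

Definition continuous_on_ts (T : R -> Prop) (f : R -> R) (t : R) : Prop :=
  forall eps, 0 < eps -> exists delta, 0 < delta /\
    forall s, T s -> Rabs (s - t) < delta -> Rabs (f s - f t) < eps.

Definition right_continuous_on_ts (T : R -> Prop) (f : R -> R) (t : R) : Prop :=
  forall eps, 0 < eps -> exists delta, 0 < delta /\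
    forall s, T s -> t <= s -> s - t < delta -> Rabs (f s - f t) < eps.

Definition ts_lim (T : R -> Prop) (g : R -> R) (t L : R) : Prop :=
  forall eps, 0 < eps -> exists delta, 0 < delta /\
    forall s, T s -> s <> t -> Rabs (s - t) < delta -> Rabs (g s - L) < eps.

Definition ts_lim_right (T : R -> Prop) (g : R -> R) (t L : R) : Prop :=
  forall eps, 0 < eps -> exists delta, 0 < delta /\
    forall s, T s -> t < s -> s - t < delta -> Rabs (g s - L) < eps.

(* Main.v *)
Require Import Defs.
From Stdlib Require Import Reals Lra Classical.
From Coquelicot Require Import Coquelicot.
Open Scope R_scope.

Lemma rpow_pos a x : 0 < x -> rpow a x = Rpower x a.
Proof. intro H; unfold rpow; destruct (Rlt_dec 0 x); [reflexivity|lra]. Qed.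

Lemma rpow_0 a : rpow a 0 = 0.
Proof. unfold rpow; destruct (Rlt_dec 0 0); [lra|]; destruct (Rlt_dec 0 0); [lra|reflexivity]. Qed.

Lemma Rpower_pos x a : 0 < Rpower x a.
Proof. unfold Rpower; apply exp_pos. Qed.

Lemma rpow_abs a x : rpow a (Rabs x) = Rabs (rpow a x).
Proof.
  unfold rpow.
  destruct (Rlt_dec 0 x).
  - rewrite Rabs_pos_eq by lra. destruct (Rlt_dec 0 x); [|lra].
    rewrite Rabs_pos_eq; [reflexivity|]. left; apply Rpower_pos.
  - destruct (Rlt_dec x 0).
    + rewrite Rabs_left by lra. destruct (Rlt_dec 0 (-x)); [|lra].
      rewrite Rabs_Ropp, Rabs_pos_eq; [reflexivity|]. left; apply Rpower_pos.
    + assert (x = 0) by lra. subst. rewrite Rabs_R0.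
      repeat (destruct (Rlt_dec _ _); [lra|]). rewrite ?Rabs_R0; reflexivity.
Qed.

Lemma rpow_nz a x : x <> 0 -> rpow a x <> 0.
Proof.
  intro H; unfold rpow. destruct (Rlt_dec 0 x).
  - apply Rgt_not_eq, Rpower_pos.
  - destruct (Rlt_dec x 0).
    + apply Ropp_neq_0_compat, Rgt_not_eq, Rpower_pos.
    + lra.
Qed.

Lemma rpow_small a e : 0 < a -> 0 < e -> exists d, 0 < d /\ forall x, 0 <= x < d -> rpow a x < e.
Proof.
  intros Ha He. exists (Rpower e (/a)). split; [apply Rpower_pos|].
  intros x [Hx1 Hx2]. destruct Hx1 as [Hx1|Hx1].
  - rewrite rpow_pos by lra.
    replace e with (Rpower (Rpower e (/a)) a).
    + apply Rlt_Rpower_l; lra.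
    + rewrite Rpower_mult, Rinv_l by lra. apply Rpower_1; lra.
  - subst. rewrite rpow_0; lra.
Qed.

Lemma rho_ub T t s : T s -> s < t -> s <= rho T t.
Proof.
  intros Hs Hst. unfold rho.
  destruct (Lub_Rbar_correct (fun s => T s /\ s < t)) as [Hub Hl].
  destruct (Lub_Rbar (fun s => T s /\ s < t)) as [r| |] eqn:E.
  - apply (Hub s); split; auto.
  - exfalso. assert (Hb : is_ub_Rbar (fun s => T s /\ s < t) (Finite t)).
    { intros y [_ Hy]. simpl; lra. }
    specialize (Hl _ Hb). simpl in Hl. exact Hl.
  - exfalso. specialize (Hub s (conj Hs Hst)). simpl in Hub. exact Hub.
Qed.

Lemma Rpower_cont a x0 : 0 < x0 -> forall e, 0 < e -> exists d, 0 < d /\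
  forall x, Rabs (x - x0) < d -> Rabs (Rpower x a - Rpower x0 a) < e.
Proof.
  intros Hx e He.
  assert (C : continuity_pt (fun x => Rpower x a) x0).
  { apply derivable_continuous_pt. exists (a * Rpower x0 (a - 1)).
    apply derivable_pt_lim_power; auto. }
  destruct (C e He) as [d [Hd H]]. exists d; split; auto.
  intros x Hxd. destruct (Req_dec x x0) as [->|Hn].
  - unfold Rminus; rewrite Rplus_opp_r, Rabs_R0; auto.
  - apply (H x). split; [unfold D_x, no_cond; split; auto|]. exact Hxd.
Qed.

Lemma part_vi T f alpha t D : is_nabla_frac_deriv T f alpha t D -> T t ->
  f t = f (rho T t) + rpow alpha (t - rho T t) * D.
Proof.
  intros H Tt.
  set (X := f t - f (rho T t) - D * rpow alpha (t - rho T t)).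
  set (c := rpow alpha (Rabs (t - rho T t))).
  assert (Hle : forall eps, 0 < eps -> Rabs X <= eps * c).
  { intros eps He. destruct (H eps He) as [d [Hd Hs]]. apply Hs.
    split; auto. destruct (classic (inA alpha)); [left|right]; split; auto; lra. }
  assert (Hc : 0 <= c). { unfold c; rewrite rpow_abs; apply Rabs_pos. }
  assert (X = 0).
  { destruct (Req_dec X 0) as [|Hn]; auto. exfalso.
    assert (Hp : 0 < Rabs X) by (apply Rabs_pos_lt; auto).
    specialize (Hle (Rabs X / (c + 1))).
    assert (0 < Rabs X / (c+1)) by (apply Rdiv_lt_0_compat; lra).
    specialize (Hle H0).
    assert (Rabs X / (c+1) * c < Rabs X).
    { unfold Rdiv. rewrite Rmult_assoc. rewrite <- (Rmult_1_r (Rabs X)) at 2.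
      apply Rmult_lt_compat_l; auto.
      apply (Rmult_lt_reg_l (c+1)); [lra|]. field_simplify; lra. }
    lra. }
  unfold X in H0. lra.
Qed.

Lemma sub_lt_abs a b d : Rabs (a - b) < d -> b - d < a < b + d.
Proof. intro H. apply Rabs_def2 in H. lra. Qed.


Lemma bound_core f t D s e :
  Rabs (f s - f t - D * rpow e (s - t)) <= 1 * rpow e (Rabs (s - t)) ->
  Rabs (f s - f t) <= (Rabs D + 1) * Rabs (rpow e (s - t)).
Proof.
  intro H. rewrite rpow_abs in H.
  replace (f s - f t) with ((f s - f t - D * rpow e (s - t)) + D * rpow e (s - t)) by ring.
  eapply Rle_trans; [apply Rabs_triang|]. rewrite Rabs_mult. lra.
Qed.

Lemma fin_core (a b c eps : R) : 0 < eps -> a <= (b + 1) * c -> 0 <= b -> 0 <= c ->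
  c < eps / (b + 1) -> a < eps.
Proof.
  intros He H Hb Hc Hlt.
  apply Rle_lt_trans with ((b+1)*c); auto.
  apply (Rmult_lt_compat_l (b+1)) in Hlt; [|lra].
  replace ((b+1) * (eps / (b+1))) with eps in Hlt by (field; lra). exact Hlt.
Qed.

Lemma part_i T f alpha t : 0 < alpha -> inA alpha -> left_dense T t ->
  nabla_frac_differentiable T f alpha t -> continuous_on_ts T f t.
Proof.
  intros Ha HA HL [D HD] eps He. unfold left_dense in HL.
  destruct (HD 1 Rlt_0_1) as [d0 [Hd0 H0]].
  assert (He' : 0 < eps / (Rabs D + 1)) by (apply Rdiv_lt_0_compat; [lra|pose proof (Rabs_pos D); lra]).
  destruct (rpow_small alpha _ Ha He') as [d1 [Hd1 H1]].
  exists (Rmin d0 d1). split; [apply Rmin_pos; auto|].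
  intros s Ts Hs.
  assert (Hn : nabla_nbhd T alpha t d0 s).
  { split; auto. left; split; auto. apply sub_lt_abs.
    eapply Rlt_le_trans; [exact Hs| apply Rmin_l]. }
  specialize (H0 s Hn). rewrite HL in H0.
  apply bound_core in H0.
  apply (fin_core _ (Rabs D) (Rabs (rpow alpha (s - t)))); auto using Rabs_pos.
  rewrite <- rpow_abs. apply H1. split; [apply Rabs_pos|].
  eapply Rlt_le_trans; [exact Hs| apply Rmin_r].
Qed.

Lemma part_ii T f alpha t : 0 < alpha -> ~ inA alpha -> left_dense T t ->
  nabla_frac_differentiable T f alpha t -> right_continuous_on_ts T f t.
Proof.
  intros Ha HA HL [D HD] eps He. unfold left_dense in HL.
  destruct (HD 1 Rlt_0_1) as [d0 [Hd0 H0]].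
  assert (He' : 0 < eps / (Rabs D + 1)) by (apply Rdiv_lt_0_compat; [lra|pose proof (Rabs_pos D); lra]).
  destruct (rpow_small alpha _ Ha He') as [d1 [Hd1 H1]].
  exists (Rmin d0 d1). split; [apply Rmin_pos; auto|].
  intros s Ts Hts Hs.
  pose proof (Rmin_l d0 d1). pose proof (Rmin_r d0 d1).
  assert (Hn : nabla_nbhd T alpha t d0 s).
  { split; auto. right; split; auto. lra. }
  specialize (H0 s Hn). rewrite HL in H0.
  apply bound_core in H0.
  apply (fin_core _ (Rabs D) (Rabs (rpow alpha (s - t)))); auto using Rabs_pos.
  rewrite <- rpow_abs. apply H1. rewrite Rabs_pos_eq by lra. lra.
Qed.

Lemma div_core a D r eps : r <> 0 -> 0 < eps ->
  Rabs (a - D * r) <= eps / 2 * Rabs r -> Rabs (a / r - D) < eps.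
Proof.
  intros Hr He H.
  replace (a / r - D) with ((a - D * r) / r) by (field; auto).
  rewrite Rabs_div by auto.
  assert (0 < Rabs r) by (apply Rabs_pos_lt; auto).
  apply Rle_lt_trans with (eps/2); [|lra]. unfold Rdiv at 1. apply (Rmult_le_reg_r (Rabs r)); auto. rewrite Rmult_assoc, Rinv_l by lra. lra.
Qed.

Lemma mul_core a L r eps : r <> 0 -> Rabs (a / r - L) < eps ->
  Rabs (a - L * r) <= eps * Rabs r.
Proof.
  intros Hr H.
  replace (a - L * r) with ((a / r - L) * r) by (field; auto).
  rewrite Rabs_mult. apply Rmult_le_compat_r; [apply Rabs_pos|lra].
Qed.

Lemma part_iv T f alpha t : inA alpha -> left_dense T t ->
     (nabla_frac_differentiable T f alpha t <->
        exists L, ts_lim T (fun s => (f s - f t) / rpow alpha (s - t)) t L) /\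
     (forall D, is_nabla_frac_deriv T f alpha t D ->
        ts_lim T (fun s => (f s - f t) / rpow alpha (s - t)) t D) /\
     (forall L, ts_lim T (fun s => (f s - f t) / rpow alpha (s - t)) t L ->
        is_nabla_frac_deriv T f alpha t L).
Proof.
  intros HA HL. unfold left_dense in HL.
  assert (P2 : forall D, is_nabla_frac_deriv T f alpha t D ->
        ts_lim T (fun s => (f s - f t) / rpow alpha (s - t)) t D).
  { intros D HD eps He. destruct (HD (eps/2)) as [d [Hd H]]; [lra|].
    exists d; split; auto. intros s Ts Hst Hs.
    assert (Hn : nabla_nbhd T alpha t d s).
    { split; auto. left; split; auto. apply sub_lt_abs; auto. }
    specialize (H s Hn). rewrite HL, rpow_abs in H.
    apply div_core; auto. apply rpow_nz; lra. }
  assert (P3 : forall L, ts_lim T (fun s => (f s - f t) / rpow alpha (s - t)) t L ->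
        is_nabla_frac_deriv T f alpha t L).
  { intros L HLim eps He. destruct (HLim eps He) as [d [Hd H]].
    exists d; split; auto. intros s [Ts Hs]. rewrite HL, rpow_abs.
    assert (Hs' : Rabs (s - t) < d).
    { destruct Hs as [[_ Hs]|[_ Hs]]; apply Rabs_def1; lra. }
    destruct (Req_dec s t) as [->|Hst].
    - unfold Rminus at 3 4; rewrite Rplus_opp_r, rpow_0, Rabs_R0.
      replace (f t - f t - L * 0) with 0 by ring. rewrite Rabs_R0; lra.
    - apply mul_core; [apply rpow_nz; lra|]. apply H; auto. }
  split; [|split; auto].
  split.
  - intros [D HD]. exists D; auto.
  - intros [L HLim]. exists L; auto.
Qed.

Lemma part_v T f alpha t : ~ inA alpha -> left_dense T t ->
     (nabla_frac_differentiable T f alpha t <->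
        exists L, ts_lim_right T (fun s => (f s - f t) / rpow alpha (s - t)) t L) /\
     (forall D, is_nabla_frac_deriv T f alpha t D ->
        ts_lim_right T (fun s => (f s - f t) / rpow alpha (s - t)) t D) /\
     (forall L, ts_lim_right T (fun s => (f s - f t) / rpow alpha (s - t)) t L ->
        is_nabla_frac_deriv T f alpha t L).
Proof.
  intros HA HL. unfold left_dense in HL.
  assert (P2 : forall D, is_nabla_frac_deriv T f alpha t D ->
        ts_lim_right T (fun s => (f s - f t) / rpow alpha (s - t)) t D).
  { intros D HD eps He. destruct (HD (eps/2)) as [d [Hd H]]; [lra|].
    exists d; split; auto. intros s Ts Hst Hs.
    assert (Hn : nabla_nbhd T alpha t d s).
    { split; auto. right; split; auto. lra. }
    specialize (H s Hn). rewrite HL, rpow_abs in H.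
    apply div_core; auto. apply rpow_nz; lra. }
  assert (P3 : forall L, ts_lim_right T (fun s => (f s - f t) / rpow alpha (s - t)) t L ->
        is_nabla_frac_deriv T f alpha t L).
  { intros L HLim eps He. destruct (HLim eps He) as [d [Hd H]].
    exists d; split; auto. intros s [Ts Hs]. rewrite HL, rpow_abs.
    assert (Hs' : t <= s < t + d).
    { destruct Hs as [[Hc _]|[_ Hs]]; [contradiction|lra]. }
    destruct (Req_dec s t) as [->|Hst].
    - unfold Rminus at 3 4; rewrite Rplus_opp_r, rpow_0, Rabs_R0.
      replace (f t - f t - L * 0) with 0 by ring. rewrite Rabs_R0; lra.
    - apply mul_core; [apply rpow_nz; lra|]. apply H; auto; lra. }
  split; [|split; auto].
  split.
  - intros [D HD]. exists D; auto.
  - intros [L HLim]. exists L; auto.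
Qed.

Lemma part_iii T f alpha t : 0 < alpha -> continuous_on_ts T f t -> left_scattered T t ->
     is_nabla_frac_deriv T f alpha t
       ((f t - f (rho T t)) / rpow alpha (t - rho T t)).
Proof.
  intros Ha Hc HL. unfold left_scattered in HL. unfold is_nabla_frac_deriv.
  set (p := rho T t) in *.
  assert (Hrho : forall s, T s -> s < t -> s <= p) by (intros; apply rho_ub; auto).
  clearbody p.
  set (a := t - p). assert (Ha0 : 0 < a) by (unfold a; lra).
  rewrite (rpow_pos _ _ Ha0).
  set (c := Rpower a alpha). assert (Hc0 : 0 < c) by apply Rpower_pos.
  set (D := (f t - f p) / c).
  assert (HDc : D * c = f t - f p) by (unfold D; field; lra).
  intros eps He.
  assert (HD1 : 0 < Rabs D + 1) by (pose proof (Rabs_pos D); lra).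
  destruct (Hc (eps * c / 2)) as [d1 [Hd1 H1]]. { apply Rdiv_lt_0_compat; [apply Rmult_lt_0_compat|]; lra. }
  destruct (Rpower_cont alpha a Ha0 (eps * c / (2 * (Rabs D + 1)))) as [d2 [Hd2 H2]].
  { apply Rdiv_lt_0_compat; [apply Rmult_lt_0_compat|]; lra. }
  exists (Rmin a (Rmin d1 d2)). split; [repeat apply Rmin_pos; auto|].
  pose proof (Rmin_l a (Rmin d1 d2)). pose proof (Rmin_r a (Rmin d1 d2)).
  pose proof (Rmin_l d1 d2). pose proof (Rmin_r d1 d2).
  intros s [Ts Hs].
  assert (Hs' : Rabs (s - t) < Rmin a (Rmin d1 d2)).
  { destruct Hs as [[_ Hs]|[_ Hs]]; apply Rabs_def1; lra. }
  apply Rabs_def2 in Hs' as Hs2.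
  assert (Hts : t <= s).
  { destruct (Rlt_dec s t) as [Hlt|]; [|lra]. specialize (Hrho s Ts Hlt). unfold a in *. lra. }
  assert (Hsp : 0 < s - p) by lra.
  rewrite (Rabs_pos_eq (s - p)) by lra. rewrite (rpow_pos _ _ Hsp).
  specialize (H1 s Ts ltac:(lra)).
  assert (H2' : Rabs (Rpower (s - p) alpha - c) < eps * c / (2 * (Rabs D + 1))).
  { apply H2. unfold a. replace (s - p - (t - p)) with (s - t) by ring. lra. }
  assert (Hmono : c <= Rpower (s - p) alpha).
  { apply Rle_Rpower_l; [lra|]. unfold a; lra. }
  replace (f s - f p - D * Rpower (s - p) alpha) with
    ((f s - f t) - D * (Rpower (s - p) alpha - c)) by (assert (Hfp : f p = f t - D * c) by lra; rewrite Hfp; ring).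
  eapply Rle_trans; [apply Rabs_triang|]. rewrite Rabs_Ropp, Rabs_mult.
  assert (Rabs D * Rabs (Rpower (s - p) alpha - c) <= eps * c / 2).
  { apply Rle_trans with ((Rabs D + 1) * Rabs (Rpower (s - p) alpha - c)).
    - pose proof (Rabs_pos (Rpower (s - p) alpha - c)). nra.
    - apply Rlt_le. apply (Rmult_lt_compat_l (Rabs D + 1)) in H2'; [|lra].
      replace ((Rabs D + 1) * (eps * c / (2 * (Rabs D + 1)))) with (eps * c / 2) in H2' by (field; lra).
      exact H2'. }
  assert (eps * c <= eps * Rpower (s - p) alpha) by (apply Rmult_le_compat_l; lra).
  lra.
Qed.

Theorem theorem3p3 (T : R -> Prop) (HT : time_scale T) (f : R -> R)
  (t : R) (Ht : T_kappa T t) (alpha : R) (Ha : 0 < alpha <= 1) :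
  (* (i) *)
  (inA alpha -> left_dense T t -> nabla_frac_differentiable T f alpha t ->
     continuous_on_ts T f t) /\
  (* (ii) *)
  (~ inA alpha -> left_dense T t -> nabla_frac_differentiable T f alpha t ->
     right_continuous_on_ts T f t) /\
  (* (iii) *)
  (continuous_on_ts T f t -> left_scattered T t ->
     is_nabla_frac_deriv T f alpha t
       ((f t - f (rho T t)) / rpow alpha (t - rho T t))) /\
  (* (iv) *)
  (inA alpha -> left_dense T t ->
     (nabla_frac_differentiable T f alpha t <->
        exists L, ts_lim T (fun s => (f s - f t) / rpow alpha (s - t)) t L) /\
     (forall D, is_nabla_frac_deriv T f alpha t D ->
        ts_lim T (fun s => (f s - f t) / rpow alpha (s - t)) t D) /\
     (forall L, ts_lim T (fun s => (f s - f t) / rpow alpha (s - t)) t L ->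
        is_nabla_frac_deriv T f alpha t L)) /\
  (* (v) *)
  (~ inA alpha -> left_dense T t ->
     (nabla_frac_differentiable T f alpha t <->
        exists L, ts_lim_right T (fun s => (f s - f t) / rpow alpha (s - t)) t L) /\
     (forall D, is_nabla_frac_deriv T f alpha t D ->
        ts_lim_right T (fun s => (f s - f t) / rpow alpha (s - t)) t D) /\
     (forall L, ts_lim_right T (fun s => (f s - f t) / rpow alpha (s - t)) t L ->
        is_nabla_frac_deriv T f alpha t L)) /\
  (* (vi) *)
  (forall D, is_nabla_frac_deriv T f alpha t D ->
     f t = f (rho T t) + rpow alpha (t - rho T t) * D).
Proof.
  destruct Ht as [Tt _].
  split; [intros; eapply part_i; eauto; lra|].
  split; [intros; eapply part_ii; eauto; lra|].
  split; [intros; apply part_iii; auto; lra|].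
  split; [apply part_iv|].
  split; [apply part_v|].
  intros D HD; apply part_vi; auto.
Qed.
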